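(* Let $G=(R,B,2,(\succsim_a)_{a\in R\cup B})$ be a roommate diversity game with room size $2$. Let $G_m$ be the complete undirected graph on vertex set $R\cup B$ in which the edge $\{a,b\}$ has weight $w(a,b)\in\{0,1,2\}$ equal to the number of agents among $a,b$ that are happy in the room $\{a,b\}$. Then every maximum weight perfect matching $M_*$ of $G_m$, viewed as an outcome of $G$ (each matched pair forms a room), is popular.
   Context: A roommate diversity game is a quadruple $G=(R,B,s,(\succsim_a)_{a\in R\cup B})$ where $R$ (red agents) and $B$ (blue agents) are disjoint finite sets, $s\in\mathbb{N}^+$ is the room size, $|R\cup B|=ks$ for some $k\in\mathbb{N}$, and each $\succsim_a$ is a complete transitive weak order on $D=\{j/s : j\in\{0,\dots,s\}\}$. An outcome is a partition $\pi$ of $N=R\cup B$ into $k$ rooms of size $s$; $\pi(a)$ is the room containing $a$, and $\theta(C)=|C\cap R|/|C|$ is the fraction of red agents of a room $C$. Agent $a$ prefers $\pi$ to $\pi'$ if $\theta(\pi(a))\succsim_a\theta(\pi'(a))$ and not $\theta(\pi'(a))\succsim_a\theta(\pi(a))$. Let $N(\pi,\pi')$ be the set of agents preferring $\pi$ to $\pi'$ and $\phi(\pi,\pi')=|N(\pi,\pi')|-|N(\pi',\pi)|$. An outcome $\pi$ is popular if $\phi(\pi,\pi')\ge 0$ for every outcome $\pi'$. For room size $2$, a red agent can only be in rooms of fraction $1/2$ or $1$, and a blue agent only in rooms of fraction $0$ or $1/2$; preferences over the impossible fraction are disregarded. An agent is happy in a room if the fraction of that room is weakly preferred by the agent to every fraction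 possible for its color (i.e. $\{1/2,1\}$ for red, $\{0,1/2\}$ for blue); otherwise it is sad. *)

(* Defs.v *)
From mathcomp Require Import all_boot all_order all_algebra.
Set Implicit Arguments. Unset Strict Implicit. Unset Printing Implicit Defensive.

(* Agents form a finite type [T]; [red a] is true for red agents (R),
   false for blue agents (B).  Room size is fixed to s = 2, so the
   fraction j/2 of a room is encoded by j : 'I_3 (j = number of red agents).
   [pref a : rel 'I_3] is agent a's weak order on D = {0, 1/2, 1}:
   [pref a x y] means x/2 is weakly preferred to y/2. *)

Import GRing.Theory Num.Theory.
Section RDG.
Variable T : finType.
Variable red : pred T.
Variable pref : T -> rel 'I_3.

Definition weak_order (r : rel 'I_3) : Prop :=
  (forall x y, r x y || r y x) /\ (forall x y z, r x y -> r y z -> r x z).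

Definition outcome (P : {set {set T}}) : Prop :=
  partition P [set: T] /\ (forall C, C \in P -> #|C| = 2).

Definition theta (C : {set T}) : 'I_3 := inord #|[set x in C | red x]|.

Definition prefers (a : T) (P P' : {set {set T}}) : bool :=
  pref a (theta (pblock P a)) (theta (pblock P' a)) &&
  ~~ pref a (theta (pblock P' a)) (theta (pblock P a)).

Definition N_pref (P P' : {set {set T}}) : {set T} :=
  [set a | prefers a P P'].

Definition phi (P P' : {set {set T}}) : int :=
  (#|N_pref P P'|)%:Z - (#|N_pref P' P|)%:Z.

Definition popular (P : {set {set T}}) : Prop :=
  forall P', outcome P' -> (0 <= phi P P')%R.

Definition possible (a : T) (j : 'I_3) : bool :=
  if red a then 1 <= j else j <= 1.

Definition happy (a : T) (C : {set T}) : bool :=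
  [forall j : 'I_3, possible a j ==> pref a (theta C) j].

Definition weight (C : {set T}) : nat := #|[set x in C | happy x C]|.

(* weight of a perfect matching of G_m (= a partition into 2-sets) *)
Definition mweight (M : {set {set T}}) : nat := \sum_(C in M) weight C.

Definition max_weight_perfect_matching (M : {set {set T}}) : Prop :=
  outcome M /\ (forall M', outcome M' -> mweight M' <= mweight M).

End RDG.

(* Main.v *)
Require Import Defs.
From mathcomp Require Import all_boot all_order all_algebra.
From mathcomp Require Import zify.

Section Aux.
Variable T : finType.
Variable red : pred T.
Variable pref : T -> rel 'I_3.
Hypothesis Hpref : forall a, weak_order (pref a).

Definition HS (P : {set {set T}}) := [set a | happy red pref a (pblock P a)].

Lemma outcome_block P (a : T) : outcome P ->
  [/\ a \in pblock P a, pblock P a \in P & #|pblock P a| = 2].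
Proof.
move=> [Hp Hc].
have ac : a \in cover P by rewrite (cover_partition Hp) inE.
have Pm := pblock_mem ac.
by split => //; [rewrite mem_pblock | apply: Hc].
Qed.

Lemma possible_theta P (a : T) : outcome P -> possible red a (theta red (pblock P a)).
Proof.
move=> HP; have [ain _ c2] := outcome_block P a HP.
set C := pblock P a in ain c2 *.
have sub : [set x in C | red x] \subset C by apply/subsetP => x; rewrite inE => /andP[].
have le2 : #|[set x in C | red x]| <= 2 by rewrite -c2 subset_leq_card.
rewrite /possible /theta.
case Ra: (red a).
  have : 0 < #|[set x in C | red x]| by apply/card_gt0P; exists a; rewrite inE ain Ra.
  by rewrite inordK //; lia.
have sub2 : [set x in C | red x] \subset C :\ a.
  by apply/subsetP => x; rewrite !inE => /andP[xC rx]; rewrite xC andbT; apply/eqP => e; rewrite e Ra in rx.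
have := subset_leq_card sub2; have := cardsD1 a C; rewrite ain c2 => h1 h.
by rewrite inordK //; lia.
Qed.

Lemma possible_two (a : T) (x y j : 'I_3) : possible red a x -> possible red a y ->
  possible red a j -> x != y -> j = x \/ j = y.
Proof.
rewrite /possible => px py pj nxy.
have hx := ltn_ord x; have hy := ltn_ord y; have hj := ltn_ord j.
have nv : (x : nat) != y by [].
have : (j : nat) = x \/ (j : nat) = y.
  by case: (red a) px py pj => /= *; lia.
by case=> e; [left|right]; apply: val_inj.
Qed.

Lemma prefers_happy P P' (a : T) : outcome P -> outcome P' ->
  prefers red pref a P P' =
  happy red pref a (pblock P a) && ~~ happy red pref a (pblock P' a).
Proof.
move=> HP HP'.
have px := possible_theta P a HP; have py := possible_theta P' a HP'.
rewrite /prefers /happy.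
set x := theta red (pblock P a) in px *; set y := theta red (pblock P' a) in py *.
have [refl tr] := Hpref a.
have rf z : pref a z z by have := refl z z; rewrite orbb.
case: (eqVneq x y) => [<-|nxy].
  by rewrite rf /= andbN.
have hx : [forall j, possible red a j ==> pref a x j] = pref a x y.
  apply/idP/idP => [/forallP/(_ y)/implyP -> //|h].
  by apply/forallP => j; apply/implyP => pj; case: (possible_two a x y j px py pj nxy) => ->.
have hy : [forall j, possible red a j ==> pref a y j] = pref a y x.
  apply/idP/idP => [/forallP/(_ x)/implyP -> //|h].
  by apply/forallP => j; apply/implyP => pj; case: (possible_two a x y j px py pj nxy) => ->.
by rewrite hx hy.
Qed.

Lemma mweight_HS P : outcome P -> mweight red pref P = #|HS P|.
Proof.
move=> HP; have [Hp Hc] := HP.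
have ti : trivIset P by case/and3P: Hp.
have := @big_trivIset_cond _ _ 0 addn P (fun x => happy red pref x (pblock P x)) (fun _ => 1) ti.
rewrite (cover_partition Hp) => E.
have -> : #|HS P| = \sum_(x in [set: T] | happy red pref x (pblock P x)) 1.
  rewrite sum1dep_card /HS; apply: eq_card => x; rewrite !inE //.
rewrite E /mweight; apply: eq_bigr => C PC.
rewrite sum1dep_card /weight; apply: eq_card => x; rewrite !inE.
case xC: (x \in C) => //=.
by rewrite (def_pblock ti PC xC).
Qed.

Lemma N_pref_HS P P' : outcome P -> outcome P' -> N_pref red pref P P' = HS P :\: HS P'.
Proof.
move=> HP HP'; apply/setP => a; rewrite !inE (prefers_happy P P' a HP HP').
by rewrite andbC.
Qed.

End Aux.

Theorem mainTheorem1 (T : finType) (red : pred T) (pref : T -> rel 'I_3)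
  (Hpref : forall a, weak_order (pref a))
  (M : {set {set T}}) :
  max_weight_perfect_matching red pref M -> popular red pref M.
Proof.
move=> [HM Hmax] P' HP'.
have le := Hmax P' HP'.
rewrite (@mweight_HS T red pref M HM) (@mweight_HS T red pref P' HP') in le.
rewrite /phi (@N_pref_HS T red pref Hpref M P' HM HP') (@N_pref_HS T red pref Hpref P' M HP' HM).
have e1 := cardsID (HS T red pref P') (HS T red pref M).
have e2 := cardsID (HS T red pref M) (HS T red pref P').
rewrite setIC in e2.
lia.
Qed.
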